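(* Consider a family, indexed by the number of qubits $n$, of parametrized $n$-qubit states $\rho(\vec{\alpha})$ depending on a random variable $\vec{\alpha}$, and a POVM $\mathcal{M} = \{M_k\}_{k=1}^{|\mathcal{M}|}$ with $|\mathcal{M}| \in \mathcal{O}(\operatorname{poly}(n))$, with outcome distribution $\mathbb{P}_{\vec{\alpha}} = (p_k(\vec{\alpha}))_k$, $p_k(\vec{\alpha}) = \operatorname{Tr}[\rho(\vec{\alpha}) M_k]$. Assume there exist $\vec{\alpha}$-independent numbers $\mu_k$ and $\beta \in \mathcal{O}(\exp(-n))$ with $\Pr_{\vec{\alpha}}(|p_k(\vec{\alpha}) - \mu_k| \geq \delta') \leq \beta/\delta'^2$ for all $k$ and all $\delta'>0$, and set $\mathbb{P}_{\rm fixed} = (\mu_1,\dots,\mu_{|\mathcal{M}|})$. Let $N \in \mathcal{O}(\operatorname{poly}(n))$, let $\Phi : \mathbb{R}^N \to \mathbb{R}^M$ be an arbitrary map, and let $\mathcal{S}_N(\vec{\alpha})$ and $\mathcal{S}_{N,\rm fixed}$ be sets of $N$ i.i.d. samples from $\mathbb{P}_{\vec{\alpha}}$ and from $\mathbb{P}_{\rm fixed}$ respectively. Then, with probability at least $1-\delta$ over $\vec{\alpha}$, with $\delta \in \mathcal{O}(\exp(-n))$, the outputs $\Phi(\mathcal{S}_N(\vec{\alpha}))$ and $\Phi(\mathcal{S}_{N,\rm fixed})$ are statistically indistinguishable: given $\Phi(\mathcal{S})$ for a sample set $\mathcal{S}$ drawn with equal probability from one of the two sources, no procedure identifies the source with probability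 exceeding that achievable from $\mathcal{S}$ itself, which is at most $\frac12 + \frac{N|\mathcal{M}|\beta^{1/4}}{4}$.
   Context: A POVM is a finite set of positive semidefinite operators summing to the identity; measuring it on $\rho$ yields outcome $k$ with probability $\operatorname{Tr}[\rho M_k]$ (outcomes are labeled by real numbers). Two distributions are statistically indistinguishable with $N$ samples if, given $N$ i.i.d. samples drawn (with equal prior probability) all from one or all from the other, no algorithm identifies the correct source with probability greater than $0.51$; outputs of a map applied to sample sets from two such distributions are called statistically indistinguishable outputs. *)

(* Defs.v *)
From mathcomp Require Import all_boot all_order all_algebra.
From mathcomp Require Import all_classical all_reals all_analysis.
From mathcomp Require Import complex.
Set Implicit Arguments. Unset Strict Implicit. Unset Printing Implicit Defensive.
Import Order.TTheory GRing.Theory Num.Theory.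
Local Open Scope ring_scope.

Section Defs.
Variable R : realType.

Definition adjmx (d1 d2 : nat) (A : 'M[R[i]]_(d1, d2)) : 'M[R[i]]_(d2, d1) :=
  (map_mx conjc A)^T.

(** positive semidefinite: <v, A v> is real and nonnegative for every v
    (in a numClosedField, [0 <= z] means z is real and nonnegative) *)
Definition psd (d : nat) (A : 'M[R[i]]_d) : Prop :=
  forall v : 'cV[R[i]]_d, 0 <= (adjmx v *m A *m v) 0 0.

Definition is_state (d : nat) (rho : 'M[R[i]]_d) : Prop :=
  psd rho /\ \tr rho = 1.

Definition is_povm (d m : nat) (M : 'I_m -> 'M[R[i]]_d) : Prop :=
  (forall k, psd (M k)) /\ \sum_(k < m) M k = 1%:M.

(** Born rule: Tr[rho M_k] (a real number for a state and a POVM element) *)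
Definition born (d : nat) (rho E : 'M[R[i]]_d) : R := complex.Re (\tr (rho *m E)).

Definition outcome_distr (d m : nat) (rho : 'M[R[i]]_d) (M : 'I_m -> 'M[R[i]]_d)
  : 'I_m -> R := fun k => born rho (M k).

Definition is_distr (m : nat) (q : 'I_m -> R) : Prop :=
  (forall k, 0 <= q k) /\ \sum_(k < m) q k = 1.

Definition iid_prob (m N : nat) (q : 'I_m -> R) (s : {ffun 'I_N -> 'I_m}) : R :=
  \prod_(j < N) q (s j).

Definition sample_vec (m N : nat) (lab : 'I_m -> R) (s : {ffun 'I_N -> 'I_m})
  : 'rV[R]_N := \row_(j < N) lab (s j).

(** A (possibly randomized) distinguishing procedure acting on the output
    y of the map Phi: it answers "source 1" with probability g y. *)
Definition decision_rule (Y : Type) (g : Y -> R) : Prop :=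
  forall y, 0 <= g y <= 1.

Definition success_prob (m N : nat) (Y : Type) (lab : 'I_m -> R)
  (q1 q2 : 'I_m -> R) (Phi : 'rV[R]_N -> Y) (g : Y -> R) : R :=
  2^-1 * (\sum_(s : {ffun 'I_N -> 'I_m}) iid_prob q1 s * g (Phi (sample_vec lab s)))
  + 2^-1 * (\sum_(s : {ffun 'I_N -> 'I_m}) iid_prob q2 s * (1 - g (Phi (sample_vec lab s)))).

Definition stat_indist_outputs (m N : nat) (Y : Type) (lab : 'I_m -> R)
  (q1 q2 : 'I_m -> R) (Phi : 'rV[R]_N -> Y) : Prop :=
  forall g : Y -> R, decision_rule g ->
    success_prob lab q1 q2 Phi g <= 51 / 100.

Definition poly_bounded (f : nat -> nat) : Prop :=
  exists c k : nat, forall n, (f n <= c * n ^ k + c)%N.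

(** f(n) in O(exp(-n)), read as "exponentially small": |f n| <= C exp(-c n)
    for some constants C and c > 0 *)
Definition exp_small (f : nat -> R) : Prop :=
  exists c C : R, 0 < c /\ forall n, `|f n| <= C * expR (- (c * n%:R)).

End Defs.

(* Main.v *)
Require Import Defs.
From mathcomp Require Import all_boot all_order all_algebra.
From mathcomp Require Import all_classical all_reals all_analysis.
From mathcomp Require Import complex.
From mathcomp Require Import ring lra.
Import Order.TTheory GRing.Theory Num.Theory.

Module M_C1.
Set Implicit Arguments. Unset Strict Implicit. Unset Printing Implicit Defensive.
Local Open Scope ring_scope.

Section Comb.
Variable R : realType.

Definition Fh (x y : nat -> R) (i j : nat) : R :=
  if (j < i)%N then x j else if j == i then x j - y j else y j.

Lemma tele n (x y : nat -> R) :
  \sum_(i < n) \prod_(j < n) Fh x y i j = \prod_(j < n) x j - \prod_(j < n) y j.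
Proof.
elim: n => [|n IH]; first by rewrite big_ord0 !big_ord0 subrr.
rewrite big_ord_recr /=.
have -> : \sum_(i < n) \prod_(j < n.+1) Fh x y (widen_ord (leqnSn n) i) j
   = (\prod_(j < n) x j - \prod_(j < n) y j) * y n.
  rewrite -IH big_distrl /=; apply: eq_bigr => i _.
  rewrite big_ord_recr /= /Fh /=.
  have hi := ltn_ord i.
  rewrite ltnNge (ltnW hi) /=.
  have -> : (n == i) = false by apply/negbTE; rewrite neq_ltn hi orbT.
  by [].
rewrite big_ord_recr /= [in RHS]big_ord_recr [in RHS]big_ord_recr /=.
have -> : \prod_(j < n) Fh x y n j = \prod_(j < n) x j.
  by apply: eq_bigr => j _; rewrite /Fh ltn_ord.
rewrite /Fh ltnn eqxx.
ring.
Qed.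

Definition ext N (f : 'I_N -> R) (j : nat) : R := oapp f 0 (insub j).
Lemma ext_val N (f : 'I_N -> R) (j : 'I_N) : ext f (val j) = f j.
Proof. by rewrite /ext valK. Qed.

Lemma sum_prod_ffun (m N : nat) (G : 'I_N -> 'I_m -> R) :
  \sum_(s : {ffun 'I_N -> 'I_m}) \prod_(j < N) G j (s j) =
  \prod_(j < N) \sum_(k < m) G j k.
Proof. by rewrite bigA_distr_bigA. Qed.

Lemma tv (m N : nat) (q1 q2 : 'I_m -> R) :
  (forall k, 0 <= q1 k) -> (forall k, 0 <= q2 k) ->
  \sum_k q1 k = 1 -> \sum_k q2 k = 1 ->
  \sum_(s : {ffun 'I_N -> 'I_m}) `|iid_prob q1 s - iid_prob q2 s|
    <= N%:R * \sum_k `|q1 k - q2 k|.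
Proof.
move=> h1 h2 s1 s2.
pose G (i : 'I_N) (j : 'I_N) (k : 'I_m) : R :=
  if (j < i)%N then q1 k else if (val j == val i) then `|q1 k - q2 k| else q2 k.
have step : forall s : {ffun 'I_N -> 'I_m},
  `|iid_prob q1 s - iid_prob q2 s| <= \sum_(i < N) \prod_(j < N) G i j (s j).
  move=> s.
  have -> : iid_prob q1 s - iid_prob q2 s =
     \sum_(i < N) \prod_(j < N) Fh (ext (fun j => q1 (s j))) (ext (fun j => q2 (s j))) i j.
    rewrite tele /iid_prob; congr (_ - _); apply: eq_bigr => j _; by rewrite ext_val.
  apply: (le_trans (ler_norm_sum _ _ _)); apply: ler_sum => i _.
  rewrite normr_prod; apply: ler_prod => j _; rewrite normr_ge0 /=.
  rewrite /Fh /G !ext_val.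
  case: ifP => _; first by rewrite ger0_norm.
  case: ifP => _; first by [].
  by rewrite ger0_norm.
apply: (le_trans (ler_sum _ (fun s _ => step s))).
rewrite exchange_big /=.
have -> : \sum_(i < N) \sum_(s : {ffun 'I_N -> 'I_m}) \prod_(j < N) G i j (s j)
   = \sum_(i < N) \sum_k `|q1 k - q2 k|.
  apply: eq_bigr => i _; rewrite sum_prod_ffun (bigD1 i) //=.
  rewrite [X in _ * X]big1; last first.
    move=> j hj; have hj' : (val j == val i) = false by apply/negbTE.
    rewrite /G /= hj'.
    by case: (j < i)%N; [exact: s1 | exact: s2].
  rewrite mulr1; apply: eq_bigr => k _; by rewrite /G /= ltnn eqxx.
by rewrite sumr_const card_ord mulr_natl.
Qed.

Lemma iid_sum1 (m N : nat) (q : 'I_m -> R) : \sum_k q k = 1 ->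
  \sum_(s : {ffun 'I_N -> 'I_m}) iid_prob q s = 1.
Proof.
move=> hs; rewrite /iid_prob (sum_prod_ffun (fun _ k => q k)).
by rewrite big1 // => j _; rewrite hs.
Qed.

Lemma succ_bound (m N : nat) (Y : Type) (lab : 'I_m -> R) (q1 q2 : 'I_m -> R)
  (Phi : 'rV[R]_N -> Y) (g : Y -> R) :
  (forall k, 0 <= q1 k) -> (forall k, 0 <= q2 k) ->
  \sum_k q1 k = 1 -> \sum_k q2 k = 1 -> decision_rule g ->
  success_prob lab q1 q2 Phi g <= 2^-1 + N%:R * (\sum_k `|q1 k - q2 k|) / 4.
Proof.
move=> h1 h2 s1 s2 hg.
set Q1 := @iid_prob R m N q1; set Q2 := @iid_prob R m N q2.
set G := fun s => g (Phi (sample_vec lab s)).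
have S1 : \sum_s Q1 s = 1 by exact: iid_sum1.
have S2 : \sum_s Q2 s = 1 by exact: iid_sum1.
have E : success_prob lab q1 q2 Phi g =
   2^-1 + 2^-1 * \sum_(s : {ffun 'I_N -> 'I_m}) (Q1 s - Q2 s) * (G s - 2^-1).
  rewrite /success_prob -/Q1 -/Q2 -/G.
  have -> : \sum_(s : {ffun 'I_N -> 'I_m}) (Q1 s - Q2 s) * (G s - 2^-1) =
     \sum_s Q1 s * G s - \sum_s Q2 s * G s - 2^-1 * \sum_s Q1 s + 2^-1 * \sum_s Q2 s.
    rewrite !mulr_sumr -!sumrB -big_split /=; apply: eq_bigr => s _; ring.
  have -> : \sum_(s : {ffun 'I_N -> 'I_m}) Q2 s * (1 - G s) = \sum_s Q2 s - \sum_s Q2 s * G s.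
    rewrite -sumrB; apply: eq_bigr => s _; ring.
  rewrite S1 S2; ring.
rewrite E lerD2l.
have T := tv N h1 h2 s1 s2.
apply: (@le_trans _ _ (2^-1 * (\sum_(s : {ffun 'I_N -> 'I_m}) `|Q1 s - Q2 s| * 2^-1))).
  rewrite ler_pM2l ?invr_gt0 ?ltr0n //.
  apply: (le_trans (ler_norm _)); apply: (le_trans (ler_norm_sum _ _ _)).
  apply: ler_sum => s _; rewrite normrM ler_wpM2l //.
  have := hg (Phi (sample_vec lab s)); rewrite -/(G s) => /andP[a b].
  rewrite ler_norml; apply/andP; split; lra.
rewrite -mulr_suml.
have h4 : forall x : R, x / 4 = 2^-1 * (x * 2^-1) by move=> x; field.
rewrite h4.
rewrite ler_pM2l ?invr_gt0 ?ltr0n // ler_pM2r ?invr_gt0 ?ltr0n //.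
Qed.

End Comb.

End M_C1.
Import M_C1.

Module M_C2.
Set Implicit Arguments. Unset Strict Implicit. Unset Printing Implicit Defensive.
Local Open Scope ring_scope.

Section Pos.
Variable R : realType.
Local Notation C := (R[i]).

Lemma herm_aux (x y z w : C) :
  0 <= x -> 0 <= w -> 0 <= x + y + z + w ->
  0 <= x + 'i * y + conjc 'i * z + conjc 'i * 'i * w -> z = conjc y.
Proof.
case: x => a1 b1; case: y => a2 b2; case: z => a3 b3; case: w => a4 b4.
rewrite !lecE /= => /andP[/eqP h1 _] /andP[/eqP h2 _] /andP[/eqP h3 _] /andP[/eqP h4 _].
congr Complex; lra.
Qed.

Lemma adjmxD d1 d2 (A B : 'M[C]_(d1, d2)) : adjmx (A + B) = adjmx A + adjmx B.
Proof. by apply/matrixP => i j; rewrite !mxE rmorphD. Qed.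

Lemma adjmxZ d1 d2 c (A : 'M[C]_(d1, d2)) : adjmx (c *: A) = conjc c *: adjmx A.
Proof. by apply/matrixP => i j; rewrite !mxE rmorphM. Qed.

Lemma adjmxK d1 d2 (A : 'M[C]_(d1, d2)) : adjmx (adjmx A) = A.
Proof. by apply/matrixP => i j; rewrite !mxE conjcK. Qed.

Lemma adjmx_delta d (i : 'I_d) : adjmx (delta_mx i 0 : 'cV[C]_d) = delta_mx 0 i.
Proof. by apply/matrixP => a b; rewrite !mxE conjc_nat andbC. Qed.

Lemma Bdelta d (E : 'M[C]_d) (i j : 'I_d) :
  (adjmx (delta_mx i 0 : 'cV[C]_d) *m E *m (delta_mx j 0 : 'cV[C]_d)) 0 0 = E i j.
Proof. by rewrite adjmx_delta -(rowE i) -(colE j) !mxE. Qed.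

Lemma quad d (E : 'M[C]_d) (i j : 'I_d) (c : C) :
  (adjmx ((delta_mx i 0 : 'cV[C]_d) + c *: (delta_mx j 0 : 'cV[C]_d)) *m E *m
     ((delta_mx i 0 : 'cV[C]_d) + c *: (delta_mx j 0 : 'cV[C]_d))) 0 0 = E i i + c * E i j + conjc c * E j i + conjc c * c * E j j.
Proof.
rewrite adjmxD adjmxZ !mulmxDl !mulmxDr -!scalemxAl -!scalemxAr.
rewrite -(Bdelta E i i) -(Bdelta E i j) -(Bdelta E j i) -(Bdelta E j j) !mxE; ring.
Qed.

Lemma psd_herm d (E : 'M[C]_d) : psd E -> forall i j, E j i = conjc (E i j).
Proof.
move=> hE i j; apply: (@herm_aux (E i i) _ _ (E j j)).
- by have := hE (delta_mx i 0); rewrite Bdelta.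
- by have := hE (delta_mx j 0); rewrite Bdelta.
- by have := hE (delta_mx i 0 + 1 *: delta_mx j 0); rewrite quad conjc1 !mul1r.
- by have := hE (delta_mx i 0 + 'i *: delta_mx j 0); rewrite quad.
Qed.

Local Open Scope sesquilinear_scope.

Lemma tcE d1 d2 (A : 'M[C]_(d1, d2)) : A ^t* = adjmx A.
Proof. by apply/matrixP => a b; rewrite !mxE. Qed.

Lemma psd_normal d (E : 'M[C]_d) : psd E -> E \is normalmx.
Proof.
move=> hE; have EE : E ^t* = E.
  by apply/matrixP => a b; rewrite tcE !mxE -psd_herm.
by apply/normalmxP; rewrite EE.
Qed.

Lemma diag_entry d (P Y : 'M[C]_d) i :
  (P *m Y *m P ^t*) i i = (adjmx (adjmx (row i P)) *m Y *m adjmx (row i P)) 0 0.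
Proof.
rewrite adjmxK.
have -> : adjmx (row i P) = col i (P ^t*).
  by apply/matrixP => a b; rewrite !mxE.
rewrite (colE i (P ^t*)) mulmxA -(colE i (row i P *m Y *m P ^t*)) -!row_mul.
by rewrite !mxE.
Qed.

Lemma tr_psd_ge0 d (X E : 'M[C]_d) : psd X -> psd E -> 0 <= \tr (X *m E).
Proof.
move=> hX hE.
have /orthomx_spectralP hsp := psd_normal hE.
set P := spectralmx E in hsp; set D := spectral_diag E in hsp.
have U : P \is unitarymx := spectral_unitarymx E.
have iP : invmx P = P ^t* := invmx_unitary U.
have PP : P *m P ^t* = 1%:M by apply/unitarymxP.
have PEP : P *m E *m P ^t* = diag_mx D.
  by rewrite hsp iP !mulmxA PP mul1mx -!mulmxA PP mulmx1.
rewrite hsp iP !mulmxA mxtrace_mulC !mulmxA mul_mx_diag /mxtrace.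
apply: sumr_ge0 => k _; rewrite mxE; apply: mulr_ge0.
  by rewrite diag_entry; apply: hX.
have -> : D 0 k = (P *m E *m P ^t*) k k by rewrite PEP mxE eqxx mulr1n.
by rewrite diag_entry; apply: hE.
Qed.

Lemma born_ge0 d (X E : 'M[C]_d) : psd X -> psd E -> 0 <= born X E.
Proof.
move=> hX hE; have := tr_psd_ge0 hX hE; rewrite lecE => /andP[_].
by rewrite /born.
Qed.

Lemma Re_sum (I : Type) (r : seq I) (F : I -> C) :
  complex.Re (\sum_(k <- r) F k) = \sum_(k <- r) complex.Re (F k).
Proof.
elim: r => [|x r IH]; first by rewrite !big_nil.
by rewrite !big_cons -IH; case: (F x); case: (\sum_(j <- r) F j).
Qed.

Lemma born_sum d m (X : 'M[C]_d) (M : 'I_m -> 'M[C]_d) :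
  \tr X = 1 -> \sum_(k < m) M k = 1%:M -> \sum_(k < m) born X (M k) = 1.
Proof.
move=> hX hM; rewrite /born -Re_sum -raddf_sum /=.
have -> : \sum_(i < m) X *m M i = X *m \sum_(i < m) M i by rewrite mulmx_sumr.
by rewrite hM mulmx1 hX.
Qed.

End Pos.

End M_C2.
Import M_C2.

Module M_C3.
Set Implicit Arguments. Unset Strict Implicit. Unset Printing Implicit Defensive.
Local Open Scope classical_set_scope.
Local Open Scope ring_scope.

Section Meas.
Variable R : realType.

Lemma meas_gt (d : measure_display) (T : measurableType d) (g : T -> R) (c : R) :
  measurable_fun setT g -> measurable [set a | c < g a].
Proof.
move=> hg; have := hg measurableT _ (measurable_itv `]c, +oo[); rewrite setTI.
have -> // : [set a | c < g a] = g @^-1` [set` `]c, +oo[%R].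
by apply/seteqP; split => a /=; rewrite in_itv /= andbT.
Qed.

Lemma meas_ge (d : measure_display) (T : measurableType d) (g : T -> R) (c : R) :
  measurable_fun setT g -> measurable [set a | c <= g a].
Proof.
move=> hg; have := hg measurableT _ (measurable_itv `[c, +oo[); rewrite setTI.
have -> // : [set a | c <= g a] = g @^-1` [set` `[c, +oo[%R].
by apply/seteqP; split => a /=; rewrite in_itv /= andbT.
Qed.

Lemma pow4 (x : R) : 0 <= x -> (x `^ 4^-1) ^+ 4 = x.
Proof.
move=> hx; rewrite -(@powR_mulrn _ _ 4) ?powR_ge0 // -powRrM mulVf ?powRr1 // pnatr_eq0.
Qed.

Lemma bad_bound (d : measure_display) (T : measurableType d) (P : probability T R)
  (f : T -> R) (beta : R) :
  measurable_fun setT f ->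
  (forall d' : R, 0 < d' -> (P [set a | (d' <= `|f a|)%R] <= (beta / d' ^+ 2)%:E)%E) ->
  (P [set a | (beta `^ 4^-1 < `|f a|)%R] <= ((beta `^ 4^-1) ^+ 2)%:E)%E.
Proof.
move=> hf hb.
have hg : measurable_fun setT (fun a => `|f a|).
  exact: (measurableT_comp (@measurable_realfun.normr_measurable R setT) hf).
have beta0 : 0 <= beta.
  have := hb 1 ltr01; rewrite expr1n divr1 => h.
  by rewrite -lee_fin; apply: le_trans h; exact: measure_ge0.
have [bpos|] := ltP 0 beta.
  set b := beta `^ 4^-1.
  have bp : 0 < b by apply: powR_gt0.
  have b4 : b ^+ 4 = beta by exact: pow4.
  apply: (le_trans (y := P [set a | b <= `|f a|])).
    apply: le_measure; rewrite ?inE; [exact: meas_gt|exact: meas_ge|].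
    by move=> a /= /ltW.
  apply: (le_trans (hb b bp)); rewrite lee_fin -b4.
  have b2 : b ^+ 2 != 0 by rewrite expf_neq0 // gt_eqF.
  by rewrite (_ : b ^+ 4 = b ^+ 2 * b ^+ 2) ?mulfK // -exprD.
move=> bneg; have bz : beta = 0 by apply/eqP; rewrite eq_le bneg beta0.
rewrite bz powR0 ?invr_eq0 ?pnatr_eq0 // expr0n /=.
set F := fun n : nat => [set a | (n.+1%:R)^-1 <= `|f a|].
have mF : forall n, measurable (F n) by move=> n; exact: meas_ge.
have hsub : [set a | 0 < `|f a|] `<=` \bigcup_n F n.
  move=> a /= ha.
  have ia : 0 <= `|f a|^-1 by rewrite invr_ge0 ltW.
  have := archi_boundP ia; set k := Num.Def.archi_bound _ => hk.
  exists k => //; rewrite /F /=.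
  apply: ltW; rewrite -[X in _ < X]invrK ltf_pV2 ?posrE ?invr_gt0 ?ltr0n //.
  by apply: (lt_le_trans hk); rewrite ler_nat.
apply: (le_trans (le_measure _ _ _ hsub)); rewrite ?inE.
- exact: meas_gt.
- exact: bigcupT_measurable.
apply: le_trans; first by apply: (@generalized_Boole_inequality _ _ _ P F) => //; exact: bigcupT_measurable.
rewrite eseries0 // => i _ _; apply/eqP; rewrite eq_le measure_ge0 andbT.
have hp : 0 < (i.+1%:R : R)^-1 by rewrite invr_gt0 ltr0Sn.
by have := hb _ hp; rewrite bz mul0r.
Qed.

Lemma good_prob (d : measure_display) (T : measurableType d) (P : probability T R)
  (m : nat) (f : 'I_m -> T -> R) (b bound : R) :
  (forall k, measurable_fun setT (f k)) ->
  (forall k, (P [set a | (b < `|f k a|)%R] <= bound%:E)%E) ->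
  measurable [set a | forall k, `|f k a| <= b] /\
  ((1 - m%:R * bound)%:E <= P [set a | forall k, (`|f k a| <= b)%R])%E.
Proof.
move=> hf hb.
set A := [set a | forall k, `|f k a| <= b].
set Fn := fun i : nat => if @insub nat (fun i => (i < m)%N) 'I_m i is Some k
  then [set a | b < `|f k a|] else set0.
have hg : forall k, measurable_fun setT (fun a => `|f k a|).
  move=> k; exact: (measurableT_comp (@measurable_realfun.normr_measurable R setT) (hf k)).
have mFn : forall i, measurable (Fn i).
  move=> i; rewrite /Fn; case: insub => [k|]; [exact: meas_gt | exact: measurable0].
have AC : ~` A = \big[setU/set0]_(i < m) Fn i.
  rewrite -bigcup_mkord; apply/seteqP; split => a /=.
  - move=> /existsNP [k hk]; exists (val k); first by rewrite /= ltn_ord.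
    by rewrite /Fn valK /=; rewrite ltNge; apply/negP.
  - move=> [i /= im]; rewrite /Fn; case: insubP => [k _ ik|]; last by rewrite im.
    move=> /= hk hA; have := hA k; rewrite leNgt hk //.
have mAC : measurable (~` A) by rewrite AC; apply: bigsetU_measurable.
have mA : measurable A by rewrite -(setCK A); exact: measurableC.
split => //.
have PA : P A = (1 - P (~` A))%E by rewrite -probability_setC // setCK.
have Pc : (P (~` A) <= (m%:R * bound)%:E)%E.
  rewrite AC; apply: le_trans; first by apply: Boole_inequality => i _; exact: mFn.
  have -> : (m%:R * bound)%:E = (\sum_(i < m) bound%:E)%E.
    by rewrite sumEFin sumr_const card_ord mulr_natl.
  apply: lee_sum => i _; rewrite /Fn valK; exact: hb.
rewrite PA EFinB; apply: leeB => //.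
Qed.

End Meas.

End M_C3.
Import M_C3.

Module M_C4.
Set Implicit Arguments. Unset Strict Implicit. Unset Printing Implicit Defensive.
Local Open Scope ring_scope.

Section Asym.
Variable R : realType.

Lemma poly_exp (e : R) (k : nat) : 0 < e ->
  exists K : R, 0 <= K /\ forall n : nat, (n%:R : R) ^+ k * expR (- (e * n%:R)) <= K.
Proof.
move=> he; set a := e / k.+1%:R.
have ha : 0 < a by rewrite divr_gt0 ?ltr0Sn.
exists (a ^- k); split; first by rewrite invr_ge0 exprn_ge0 // ltW.
move=> n.
have hn : 0 <= (n%:R : R) by rewrite ler0n.
have han : 0 <= a * n%:R by apply: mulr_ge0; [exact: ltW | exact: hn].
have h1 : (a * n%:R) ^+ k <= expR (e * n%:R).
  apply: (le_trans (y := (1 + a * n%:R) ^+ k)).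
    apply: lerXn2r; rewrite ?nnegrE //; lra.
  apply: (le_trans (y := expR (a * n%:R) ^+ k)).
    apply: lerXn2r; rewrite ?nnegrE ?expR_ge0 //; last exact: expR_ge1Dx.
    lra.
  rewrite -expRM_natl ler_expR.
  have -> : (k%:R * (a * n%:R) : R) = (k%:R * a) * n%:R by ring.
  rewrite ler_wpM2r //.
  rewrite /a mulrCA ger_pMr // ler_pdivrMr ?ltr0Sn // mul1r ler_nat //.
have : (n%:R : R) ^+ k = a ^- k * (a * n%:R) ^+ k.
  by rewrite [(a * _) ^+ _]exprMn mulrA mulVf ?mul1r // expf_neq0 // gt_eqF.
move=> ->; rewrite -mulrA; apply: ler_piMr; first by rewrite invr_ge0 exprn_ge0 // ltW.
by rewrite expRN ler_pdivrMr ?expR_gt0 // mul1r.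
Qed.

Lemma quarter (beta Cb u : R) : 0 <= beta -> 0 <= u -> beta <= Cb * u ^+ 12 ->
  beta `^ 4^-1 <= Num.max 1 Cb * u ^+ 3.
Proof.
move=> hb hu hle.
set K := Num.max 1 Cb.
have K1 : 1 <= K by rewrite le_max lexx.
have KC : Cb <= K by rewrite le_max lexx orbT.
have K0 : 0 <= K by apply: le_trans K1.
have K4 : K <= K ^+ 4.
  by rewrite exprS; apply: ler_peMr => //; apply: exprn_ege1.
rewrite -(ler_pXn2r (n := 4)) // ?nnegrE ?powR_ge0 ?mulr_ge0 ?exprn_ge0 //.
rewrite pow4 // exprMn -exprM /=.
apply: (le_trans hle); apply: ler_wpM2r; first by rewrite exprn_ge0.
exact: le_trans KC K4.
Qed.

Lemma alg1 (m b Am K u : R) : 0 < u -> u <= 1 -> 0 <= m -> 0 <= b ->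
  m * u <= Am -> b <= K * u ^+ 3 -> m * b ^+ 2 <= Am * K ^+ 2 * u.
Proof.
move=> u0 u1 m0 b0 hm hb.
have Ku : 0 <= K * u ^+ 3 by apply: le_trans hb.
have u0' : 0 <= u by apply: ltW.
have mu0 : 0 <= m * u by apply: mulr_ge0.
have Am0 : 0 <= Am by apply: le_trans hm.
have K2 : 0 <= K ^+ 2 by apply: sqr_ge0.
apply: (le_trans (y := m * (K * u ^+ 3) ^+ 2)).
  by apply: ler_wpM2l => //; apply: lerXn2r.
have -> : m * (K * u ^+ 3) ^+ 2 = (m * u) * (K ^+ 2 * u ^+ 5) by ring.
have h5 : 0 <= K ^+ 2 * u ^+ 5 by apply: mulr_ge0 => //; apply: exprn_ge0.
apply: (le_trans (ler_wpM2r h5 hm)).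
rewrite -mulrA; apply: ler_wpM2l => //; apply: ler_wpM2l => //.
have -> : u ^+ 5 = u * u ^+ 4 by rewrite -exprS.
by apply: ler_piMr => //; apply: exprn_ile1.
Qed.

Lemma alg2 (N m b AN Am K u : R) : 0 < u -> 0 <= N -> 0 <= m -> 0 <= b ->
  N * u <= AN -> m * u <= Am -> b <= K * u ^+ 3 -> N * m * b <= AN * Am * K * u.
Proof.
move=> u0 N0 m0 b0 hN hm hb.
have u0' : 0 <= u by apply: ltW.
have Ku : 0 <= K * u ^+ 3 by apply: le_trans hb.
have K0 : 0 <= K.
  by move: Ku; rewrite pmulr_lge0 // exprn_gt0.
apply: (le_trans (y := N * m * (K * u ^+ 3))).
  by apply: ler_wpM2l => //; apply: mulr_ge0.
have -> : N * m * (K * u ^+ 3) = (N * u) * (m * u) * (K * u) by ring.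
rewrite -[AN * Am * K * u]mulrA; apply: ler_wpM2r; first by apply: mulr_ge0.
apply: ler_pM => //; apply: mulr_ge0 => //.
Qed.

End Asym.

End M_C4.
Import M_C4.

Local Open Scope classical_set_scope.
Local Open Scope ring_scope.

Theorem corollary3
  (R : realType)
  (* probability space of the random parameters alpha, for each n *)
  (disp : nat -> measure_display) (T : forall n, measurableType (disp n))
  (P : forall n, probability (T n) R)
  (* parametrized n-qubit states *)
  (rho : forall n, T n -> 'M[R[i]]_(2 ^ n))
  (* POVM with m n outcomes, real outcome labels lab n *)
  (m : nat -> nat) (Mv : forall n, 'I_(m n) -> 'M[R[i]]_(2 ^ n))
  (lab : forall n, 'I_(m n) -> R)
  (mu : forall n, 'I_(m n) -> R) (beta : nat -> R)
  (N : nat -> nat) (Mout : nat -> nat)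
  (Phi : forall n, 'rV[R]_(N n) -> 'rV[R]_(Mout n)) :
  (forall n a, is_state (rho n a)) ->
  (forall n, is_povm (Mv n)) ->
  poly_bounded m ->
  (forall n k, measurable_fun setT (fun a => born (rho n a) (Mv n k))) ->
  (forall n, is_distr (mu n)) ->
  exp_small beta ->
  (forall n k (d' : R), 0 < d' ->
     (P n [set a | (d' <= `|born (rho n a) (Mv n k) - mu n k|)%R]
       <= (beta n / d' ^+ 2)%:E)%E) ->
  poly_bounded N ->
  exists delta : (nat -> R), exp_small delta /\
  exists n0 : nat, forall n,
    exists A : set (T n), measurable A /\ (((1 - delta n)%R)%:E <= P n A)%E /\
    forall a, A a ->
      (forall g : ('rV[R]_(Mout n) -> R), decision_rule g ->
         success_prob (lab n) (outcome_distr (rho n a) (Mv n)) (mu n) (Phi n) g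
           <= 2^-1 + (N n)%:R * (m n)%:R * powR (beta n) (4^-1) / 4) /\
      (leq n0 n -> stat_indist_outputs (lab n) (outcome_distr (rho n a) (Mv n)) (mu n) (Phi n)).
Proof.
move=> hst hpovm [c1 [k1 hm]] hmeas hmu [cb [Cb [cbp hbeta]]] hcheb [c2 [k2 hN]].
pose e := cb / 12%:R.
have ep : 0 < e by rewrite divr_gt0 // ltr0n.
have [K1 [K10 hK1]] := poly_exp k1 ep.
have [K2 [K20 hK2]] := poly_exp k2 ep.
pose K := Num.max 1 Cb.
have K0 : 0 <= K by rewrite /K le_max ler01.
pose Am := c1%:R * (K1 + 1) : R.
pose AN := c2%:R * (K2 + 1) : R.
have Am0 : 0 <= Am by apply: mulr_ge0; rewrite ?ler0n // addr_ge0.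
have AN0 : 0 <= AN by apply: mulr_ge0; rewrite ?ler0n // addr_ge0.
pose u := fun n : nat => expR (- (e * n%:R)).
have u0 : forall n, 0 < u n by move=> n; apply: expR_gt0.
have u1 : forall n, u n <= 1.
  by move=> n; rewrite /u expR_le1 oppr_le0; apply: mulr_ge0; rewrite ?ler0n ?ltW.
have polyb : forall (f : nat -> nat) c k K0, (forall n, (f n <= c * n ^ k + c)%N) ->
    (forall n, (n%:R : R) ^+ k * u n <= K0) -> forall n, (f n)%:R * u n <= c%:R * (K0 + 1).
  move=> f c k K' hf hK n.
  have h1 : ((f n)%:R : R) <= c%:R * n%:R ^+ k + c%:R.
    by rewrite -natrX -natrM -natrD ler_nat.
  apply: (le_trans (y := (c%:R * n%:R ^+ k + c%:R) * u n)).
    by apply: ler_wpM2r => //; apply: ltW.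
  rewrite mulrDl -mulrA mulrDr mulr1; apply: lerD.
    by apply: ler_wpM2l; rewrite ?ler0n.
  by apply: ler_piMr; rewrite ?ler0n.
have Hm : forall n, (m n)%:R * u n <= Am by apply: polyb.
have HN : forall n, (N n)%:R * u n <= AN by apply: polyb.
have hbeta0 : forall n, 0 <= beta n.
  move=> n; have : (0 < m n)%N.
    case: (posnP (m n)) => // h0; move: (hmu n).2.
    rewrite big1 => [/eqP|i _]; first by rewrite eq_sym oner_eq0.
    by have := ltn_ord i; move: (nat_of_ord i) => j; rewrite h0.
  move=> mp; have := hcheb n (Ordinal mp) 1 ltr01; rewrite expr1n divr1 => h.
  by rewrite -lee_fin; apply: le_trans h; exact: measure_ge0.
pose b := fun n => beta n `^ 4^-1.
have Hb : forall n, b n <= K * u n ^+ 3.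
  move=> n; apply: quarter => //; first exact: ltW.
  have heq : expR (- (cb * n%:R)) = u n ^+ 12.
    by rewrite /u -expRM_natl; congr expR; rewrite /e; field.
  rewrite -heq; apply: (le_trans (ler_norm _)); exact: hbeta.
have b0 : forall n, 0 <= b n by move=> n; apply: powR_ge0.
pose delta := fun n => (m n)%:R * b n ^+ 2.
exists delta; split.
  exists e, (Am * K ^+ 2); split => // n.
  rewrite ger0_norm; last by apply: mulr_ge0; rewrite ?ler0n ?exprn_ge0.
  by apply: alg1; [exact: u0|exact: u1|rewrite ler0n|exact: b0|exact: Hm|exact: Hb].
pose Z := AN * Am * K.
have Z0 : 0 <= Z by apply: mulr_ge0 => //; apply: mulr_ge0.
have Ze : 0 <= 25%:R * Z / e by apply: divr_ge0; [apply: mulr_ge0; rewrite ?ler0n | apply: ltW].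
exists (Num.Def.archi_bound (25%:R * Z / e)) => n.
set A := [set a | forall k, (`|born (rho n a) (Mv n k) - mu n k| <= b n)%R].
have H1 : forall k : 'I_(m n), measurable_fun setT (fun a => born (rho n a) (Mv n k) - mu n k).
  move=> k; apply: measurable_realfun.measurable_funB => //; exact: measurable_cst.
have H2 : forall k : 'I_(m n),
    (P n [set a | (b n < `|born (rho n a) (Mv n k) - mu n k|)%R] <= (b n ^+ 2)%:E)%E.
  move=> k; apply: bad_bound; first exact: H1.
  exact: hcheb.
have [mA PA] := @good_prob R _ _ (P n) (m n)
   (fun k a => born (rho n a) (Mv n k) - mu n k) (b n) (b n ^+ 2) H1 H2.
exists A; split => //; split => // a hA.
set q1 := outcome_distr (rho n a) (Mv n).
have q1nn : forall k, 0 <= q1 k.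
  by move=> k; apply: born_ge0; [exact: (hst n a).1 | exact: ((hpovm n).1 k)].
have q1s : \sum_k q1 k = 1.
  by apply: born_sum; [exact: (hst n a).2 | exact: (hpovm n).2].
have S : \sum_k `|q1 k - mu n k| <= (m n)%:R * b n.
  apply: (le_trans (y := \sum_(k < m n) b n)); first by apply: ler_sum => k _; apply: hA.
  by rewrite sumr_const card_ord mulr_natl.
have SB : forall g : ('rV[R]_(Mout n) -> R), decision_rule g ->
    success_prob (lab n) q1 (mu n) (Phi n) g <= 2^-1 + (N n)%:R * (m n)%:R * b n / 4.
  move=> g hg.
  apply: (le_trans (succ_bound _ _ q1nn (hmu n).1 q1s (hmu n).2 hg)).
  rewrite lerD2l -mulrA mulrA; apply: ler_wpM2r; first by rewrite invr_ge0 ler0n.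
  rewrite -mulrA.
  by apply: ler_wpM2l; rewrite ?ler0n.
split; first exact: SB.
move=> hn g hg; apply: (le_trans (SB g hg)).
have X0 : 0 <= (N n)%:R * (m n)%:R * b n.
  by apply: mulr_ge0; [apply: mulr_ge0; rewrite ler0n|exact: b0].
have XZ : (N n)%:R * (m n)%:R * b n <= Z * u n.
  by apply: alg2; [exact: u0|rewrite ler0n|rewrite ler0n|exact: b0|exact: HN|exact: Hm|exact: Hb].
have hn' : 25%:R * Z / e < n%:R.
  apply: (lt_le_trans (archi_boundP Ze)); rewrite ler_nat; exact: hn.
have hZ : 25%:R * Z <= e * n%:R.
  by move: hn'; rewrite ltr_pdivrMr // [n%:R * e]mulrC => /ltW.
have hu : (1 + e * n%:R) * u n <= 1.
  rewrite /u expRN ler_pdivrMr ?expR_gt0 // mul1r; exact: expR_ge1Dx.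
have hun : 0 <= u n by apply: ltW.
have : 25%:R * (Z * u n) <= 1.
  apply: le_trans hu; rewrite mulrA; apply: ler_wpM2r => //.
  apply: (le_trans hZ); lra.
move=> h25.
have : 25%:R * ((N n)%:R * (m n)%:R * b n) <= 1.
  apply: le_trans h25; apply: ler_wpM2l => //; rewrite ler0n.
move: X0; set X := (N n)%:R * (m n)%:R * b n => X0 hX.
lra.
Qed.
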